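(* Let $\lambda\in\mathbb{R}\setminus\{0\}$, $k\in\mathbb{Z}$, $u\in\mathbb{C}$ with $u\neq1$, and $x,y\in\mathbb{R}$. Then for every integer $n\ge0$, \[ 2\Big\{\sum_{l=0}^{n}\binom{n}{l}(1)_{n-l,\lambda}FG_{l,\lambda}^{[k,c]}(x,y;u)-u\,FG_{n,\lambda}^{[k,c]}(x,y;u)\Big\} =(1-u)\,n\sum_{m=0}^{n-1}\frac{\binom{n-1}{m}}{m+1}\sum_{j=1}^{m+1}\frac{(1)_{j,\lambda}}{j^{k-1}}S_{1,\lambda}(m+1,j)\sum_{l=0}^{n-1-m}\binom{n-1-m}{l}(x)_{n-1-m-l,\lambda}\big((iy)_{l,\lambda}+(-iy)_{l,\lambda}\big) \] and \[ 2i\Big\{\sum_{l=0}^{n}\binom{n}{l}(1)_{n-l,\lambda}FG_{l,\lambda}^{[k,s]}(x,y;u)-u\,FG_{n,\lambda}^{[k,s]}(x,y;u)\Big\} =(1-u)\,n\sum_{m=0}^{n-1}\frac{\binom{n-1}{m}}{m+1}\sum_{j=1}^{m+1}\frac{(1)_{j,\lambda}}{j^{k-1}}S_{1,\lambda}(m+1,j)\sum_{l=0}^{n-1-m}\binom{n-1-m}{l}(x)_{n-1-m-l,\lambda}\big((iy)_{l,\lambda}-(-iy)_{l,\lambda}\big). \]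
   Context: All generating functions are formal power series in $t$. For $z\in\mathbb{C}$: $(z)_{0,\lambda}=1$ and $(z)_{n,\lambda}=z(z-\lambda)\cdots(z-(n-1)\lambda)$ for $n\ge1$. The degenerate exponential is $e_\lambda^{z}(t)=\sum_{n\ge0}(z)_{n,\lambda}\frac{t^n}{n!}$ (i.e. $(1+\lambda t)^{z/\lambda}$), and $e_\lambda(t)=e_\lambda^{1}(t)$. Also $\log_\lambda(1+t)=\frac{1}{\lambda}\big((1+t)^\lambda-1\big)$. The degenerate Stirling numbers of the first kind are defined by $\frac{1}{j!}(\log_\lambda(1+t))^j=\sum_{n\ge j}S_{1,\lambda}(n,j)\frac{t^n}{n!}$. The modified degenerate polyexponential function is $\mathrm{Ei}_{k,\lambda}(x)=\sum_{n\ge1}\frac{(1)_{n,\lambda}}{n^k(n-1)!}x^n$. The degenerate cosine and sine are $\cos_\lambda^{(y)}(t)=\frac{e_\lambda^{iy}(t)+e_\lambda^{-iy}(t)}{2}$ and $\sin_\lambda^{(y)}(t)=\frac{e_\lambda^{iy}(t)-e_\lambda^{-iy}(t)}{2i}$. The cosine and sine degenerate poly-Frobenius-Genocchi polynomials are defined by $\sum_{n\ge0}FG_{n,\lambda}^{[k,c]}(x,y;u)\frac{t^n}{n!}=\frac{(1-u)\mathrm{Ei}_{k,\lambda}(\log_\lambda(1+t))}{e_\lambda(t)-u}e_\lambda^{x}(t)\cos_\lambda^{(y)}(t)$ and $\sum_{n\ge0}FG_{n,\lambda}^{[k,s]}(x,y;u)\frac{t^n}{n!}=\frac{(1-u)\mathrm{Ei}_{k,\lambda}(\log_\lambda(1+t))}{e_\lambda(t)-u}e_\lambda^{x}(t)\sin_\lambda^{(y)}(t)$.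 *)

(* Defs.v *)
From HB Require Import structures.
From mathcomp Require Import all_boot all_order all_algebra.
From mathcomp Require Import complex reals.
Set Implicit Arguments. Unset Strict Implicit. Unset Printing Implicit Defensive.
Import Order.TTheory GRing.Theory Num.Theory.
Local Open Scope ring_scope.
Local Open Scope complex_scope.

Section Defs.
Variable R : realType.
Local Notation C := (R[i]).

(* formal power series in t over C, represented by their coefficient sequence *)
Definition ps := nat -> C.

Definition ps_add (f g : ps) : ps := fun n => f n + g n.
Definition ps_scale (c : C) (f : ps) : ps := fun n => c * f n.
Definition ps_mul (f g : ps) : ps := fun n => \sum_(i < n.+1) f i * g (n - i)%N.
Definition ps_pow (f : ps) (m : nat) : ps :=
  iter m (ps_mul f) (fun n => if n == 0%N then 1 else 0).

(* multiplicative inverse of a series with invertible constant term: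
   g 0 = f0^-1,  g n = - f0^-1 * sum_{i=1}^n f i * g (n-i) *)
Fixpoint ps_inv_seq (f : ps) (n : nat) : seq C :=
  match n with
  | 0 => [:: (f 0%N)^-1]
  | n'.+1 => let s := ps_inv_seq f n' in
      rcons s (- (f 0%N)^-1 *
               \sum_(1 <= i < n'.+2) f i * nth 0 s (n'.+1 - i)%N)
  end.
Definition ps_inv (f : ps) : ps := fun n => nth 0 (ps_inv_seq f n) n.
Definition ps_div (f g : ps) : ps := ps_mul f (ps_inv g).

(* composition a(L(t)) for a series L with zero constant term:
   [t^N] a(L) = sum_{m <= N} a_m [t^N] L^m *)
Definition ps_comp (a L : ps) : ps :=
  fun N => \sum_(m < N.+1) a m * ps_pow L m N.

Definition dfall (z : C) (n : nat) (lam : R) : C :=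
  \prod_(i < n) (z - (i%:R * lam)%:C).

Definition dexp (lam : R) (z : C) : ps := fun n => dfall z n lam / (n`!)%:R.

(* log_lam(1+t) = ((1+t)^lam - 1)/lam, with (1+t)^lam = e_1^lam(t) *)
Definition dlog1p (lam : R) : ps :=
  fun n => if n == 0%N then 0 else dexp 1 lam%:C n / lam%:C.

(* S_{1,lam}(n,j) : (1/j!) (log_lam(1+t))^j = sum_n S_{1,lam}(n,j) t^n/n! *)
Definition S1 (lam : R) (n j : nat) : C :=
  (n`!)%:R * (ps_pow (dlog1p lam) j n / (j`!)%:R).

Definition Ei_coef (k : int) (lam : R) : ps :=
  fun n => if n == 0%N then 0
           else dfall 1 n lam / ((n%:R : C) ^ k * ((n.-1)`!)%:R).

Definition dcos (lam y : R) : ps :=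
  fun n => (dexp lam (y%:C * 'i) n + dexp lam (- (y%:C * 'i)) n) / 2%:R.
Definition dsin (lam y : R) : ps :=
  fun n => (dexp lam (y%:C * 'i) n - dexp lam (- (y%:C * 'i)) n) / (2%:R * 'i).

(* generating function (1-u) Ei_{k,lam}(log_lam(1+t)) / (e_lam(t) - u) * e_lam^x(t) * trig(t) *)
Definition FG_gf (k : int) (lam : R) (u : C) (x : R) (trig : ps) : ps :=
  ps_mul (ps_mul (ps_div (ps_scale (1 - u) (ps_comp (Ei_coef k lam) (dlog1p lam)))
                         (ps_add (dexp lam 1) (fun n => if n == 0%N then - u else 0)))
                 (dexp lam x%:C)) trig.

Definition FGc (n : nat) (lam : R) (k : int) (x y : R) (u : C) : C :=
  (n`!)%:R * FG_gf k lam u x (dcos lam y) n.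
Definition FGs (n : nat) (lam : R) (k : int) (x y : R) (u : C) : C :=
  (n`!)%:R * FG_gf k lam u x (dsin lam y) n.

End Defs.

(* Main.v *)
Require Import Defs.
From HB Require Import structures.
From mathcomp Require Import all_boot all_order all_algebra.
From mathcomp Require Import complex reals.
From mathcomp Require Import ring zify.
Import Order.TTheory GRing.Theory Num.Theory.
Local Open Scope ring_scope.
Local Open Scope complex_scope.

Section Aux.
Variable R : realType.
Local Notation C := (R[i]).

Definition tr (n : nat) (f : ps R) : {poly C} := \poly_(i < n.+1) f i.
Definition eqt (n : nat) (p q : {poly C}) := forall i, (i <= n)%N -> p`_i = q`_i.

Lemma eqt_refl n p : eqt n p p. Proof. by []. Qed.
Lemma eqt_sym n p q : eqt n p q -> eqt n q p.
Proof. by move=> H i Hi; rewrite H. Qed.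
Lemma eqt_trans n p q r : eqt n p q -> eqt n q r -> eqt n p r.
Proof. by move=> H1 H2 i Hi; rewrite H1 // H2. Qed.
Lemma eqt_eq n p q : p = q -> eqt n p q.
Proof. by move=> ->. Qed.

Lemma eqt_mul n p p' q q' : eqt n p p' -> eqt n q q' -> eqt n (p * q) (p' * q').
Proof.
move=> H1 H2 i Hi; rewrite !coefM; apply: eq_bigr => j _.
have Hj := ltn_ord j.
rewrite H1; last by lia.
by rewrite H2 //; lia.
Qed.

Arguments eqt_trans {n p q r}.
Arguments eqt_sym {n p q}.
Arguments eqt_mul {n p p' q q'}.

Lemma tr_coef n f i : (i <= n)%N -> (tr n f)`_i = f i.
Proof. by move=> Hi; rewrite /tr coef_poly ltnS Hi. Qed.

Lemma tr_mul n f g : eqt n (tr n (ps_mul f g)) (tr n f * tr n g).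
Proof.
move=> i Hi; rewrite tr_coef // coefM /ps_mul; apply: eq_bigr => j _.
have Hj := ltn_ord j.
by rewrite !tr_coef //; lia.
Qed.

Lemma ps_mul_coef n f g i : (i <= n)%N -> ps_mul f g i = (tr n f * tr n g)`_i.
Proof. by move=> Hi; rewrite -tr_mul // tr_coef. Qed.

Lemma tr_scale n c f : eqt n (tr n (ps_scale c f)) (c%:P * tr n f).
Proof. by move=> i Hi; rewrite coefCM !tr_coef. Qed.

Lemma ps_inv_seq_size (f : ps R) n : size (ps_inv_seq f n) = n.+1.
Proof. by elim: n => [|n IH] //=; rewrite size_rcons IH. Qed.

Lemma ps_inv_nth (f : ps R) n i : (i <= n)%N -> nth 0 (ps_inv_seq f n) i = ps_inv f i.
Proof.
elim: n i => [|n IH] i Hi.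
  by move: Hi; rewrite leqn0 => /eqP ->.
case: (ltngtP i n.+1) => Hin; last 2 first.
- by lia.
- by rewrite Hin.
rewrite /= nth_rcons ps_inv_seq_size Hin IH //.
Qed.

Lemma ps_inv_S (f : ps R) n : ps_inv f n.+1 =
  - (f 0%N)^-1 * \sum_(1 <= i < n.+2) f i * ps_inv f (n.+1 - i)%N.
Proof.
rewrite {1}/ps_inv /= nth_rcons ps_inv_seq_size ltnn eqxx.
congr (_ * _); apply: eq_big_nat => i /andP [H1 H2].
by rewrite ps_inv_nth //; lia.
Qed.

Lemma ps_mul_inv (f : ps R) n : f 0%N != 0 ->
  ps_mul f (ps_inv f) n = (n == 0%N)%:R.
Proof.
move=> Hf; case: n => [|n].
  by rewrite /ps_mul big_ord1 /ps_inv /= mulfV.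
rewrite /ps_mul big_ord_recl subn0 ps_inv_S.
rewrite big_add1 /= big_mkord.
under [X in _ + X]eq_bigr => i _ do rewrite /bump /=.
rewrite mulrA mulrN mulfV // mulN1r.
have -> : \sum_(i < n.+1) f (1 + i)%N * ps_inv f (n.+1 - (1 + i))%N
        = \sum_(i < n.+1) f i.+1 * ps_inv f (n.+1 - i.+1)%N by [].
by rewrite addNr.
Qed.


Lemma ps_mul_ext (f f' g g' : ps R) n :
  (forall i, f i = f' i) -> (forall i, g i = g' i) -> ps_mul f g n = ps_mul f' g' n.
Proof. by move=> H1 H2; rewrite /ps_mul; apply: eq_bigr => i _; rewrite H1 H2. Qed.

Lemma ps_mul_scaler (f g : ps R) c n :
  ps_mul f (fun i => c * g i) n = c * ps_mul f g n.
Proof. rewrite /ps_mul mulr_sumr; apply: eq_bigr => i _; ring. Qed.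

Lemma stepA (k : int) (lam : R) (u : C) (x : R) (trig : ps R) n : u != 1 ->
  ps_mul (FG_gf k lam u x trig)
    (ps_add (dexp lam 1) (fun n => if n == 0%N then - u else 0)) n =
  (1 - u) * ps_mul (ps_comp (Ei_coef k lam) (dlog1p lam)) (ps_mul trig (dexp lam x%:C)) n.
Proof.
move=> hu.
set E := ps_comp _ _; set D := ps_add _ _; set X := dexp _ _.
have HD : D 0%N != 0.
  rewrite /D /ps_add /= /dexp /dfall big_ord0 div1r invr1 subr_eq0 eq_sym //.
have Hinv : eqt n (tr n D * tr n (ps_inv D)) 1.
  by move=> i Hi; rewrite -ps_mul_coef // ps_mul_inv // coef1.
rewrite (ps_mul_coef _ _ _ _ (leqnn n)) (ps_mul_coef _ _ _ _ (leqnn n)) -coefCM.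
have HF : eqt n (tr n (FG_gf k lam u x trig))
   ((((1 - u)%:P * tr n E) * tr n (ps_inv D)) * tr n X * tr n trig).
  rewrite /FG_gf.
  refine (eqt_trans (tr_mul _ _ _) _).
  refine (eqt_trans (eqt_mul (tr_mul _ _ _) (eqt_refl _ _)) _).
  refine (eqt_trans (eqt_mul (eqt_mul (tr_mul _ _ _) (eqt_refl _ _)) (eqt_refl _ _)) _).
  exact: (eqt_mul (eqt_mul (eqt_mul (tr_scale _ _ _) (eqt_refl _ _)) (eqt_refl _ _)) (eqt_refl _ _)).
suff H : eqt n (tr n (FG_gf k lam u x trig) * tr n D) ((1 - u)%:P * (tr n E * tr n (ps_mul trig X))) by exact: H.
refine (eqt_trans (eqt_mul HF (eqt_refl _ (tr n D))) _).
refine (@eqt_trans _ _ (((1 - u)%:P * tr n E * (tr n trig * tr n X)) * (tr n D * tr n (ps_inv D))) _ _ _).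
  by apply: eqt_eq; ring.
refine (eqt_trans (eqt_mul (eqt_refl _ _) Hinv) _).
rewrite mulr1 -mulrA; refine (eqt_mul (eqt_refl _ _) (eqt_mul (eqt_refl _ _) _)).
exact: eqt_sym (tr_mul _ _ _).
Qed.

Lemma fact_neq0 m : ((m`!)%:R : C) != 0.
Proof. by rewrite pnatr_eq0 -lt0n fact_gt0. Qed.

Lemma stepB (lam : R) (u : C) (F : ps R) n :
  \sum_(l < n.+1) 'C(n, l)%:R * dfall 1 (n - l) lam * ((l`!)%:R * F l)
   - u * ((n`!)%:R * F n) =
  (n`!)%:R * ps_mul F (ps_add (dexp lam 1) (fun n => if n == 0%N then - u else 0)) n.
Proof.
rewrite /ps_mul /ps_add.
under [in RHS]eq_bigr => i _ do rewrite mulrDr.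
rewrite big_split /= mulrDr.
have -> : \sum_(i < n.+1) F i * (if (n - i)%N == 0%N then - u else 0) = F n * - u.
  rewrite big_ord_recr /= subnn eqxx big1 ?add0r //.
  move=> i _; have Hi := ltn_ord i.
  have -> : (n - i == 0)%N = false by apply/negbTE; rewrite subn_eq0 -ltnNge.
  by rewrite mulr0.
congr (_ + _); last by ring.
rewrite mulr_sumr; apply: eq_bigr => i _.
have Hi : (i <= n)%N by rewrite -ltnS.
have H := bin_fact Hi.
have Hf := fact_neq0 (n - i).
rewrite /dexp -H natrM natrM.
field.
by rewrite Hf.
Qed.


Lemma natS_neq0 m : ((m.+1)%:R : C) != 0.
Proof. by rewrite pnatr_eq0. Qed.

Lemma stepC1 (k : int) (lam : R) m :
  ((m.+1)`!)%:R * ps_comp (Ei_coef k lam) (dlog1p lam) m.+1 =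
  \sum_(1 <= j < m.+2) dfall 1 j lam / ((j%:R : C) ^ (k - 1)) * S1 lam m.+1 j.
Proof.
rewrite /ps_comp big_ord_recl /= {1}/Ei_coef eqxx mul0r add0r.
rewrite big_add1 /= big_mkord mulr_sumr; apply: eq_bigr => j _.
rewrite /Ei_coef /= /S1 /bump /= add1n.
have Hk : ((j.+1)%:R : C) ^ k = (j.+1)%:R ^ (k - 1) * (j.+1)%:R.
  by rewrite -{1}(subrK 1 k) expfzDr ?natS_neq0 // expr1z.
rewrite Hk (factS j) natrM !add0n.
have Hz : ((j.+1)%:R : C) ^ (k - 1) != 0 by apply: expfz_neq0; exact: natS_neq0.
set z := _ ^ (k - 1).
have H1 := natS_neq0 j. have H2 := fact_neq0 j.
field.
by rewrite H2 Hz andbT [1 + _]addrC natr1.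
Qed.

Lemma stepC2 (x lam : R) (Tpp : nat -> C) N :
  (N`!)%:R * ps_mul (fun j => Tpp j / (j`!)%:R) (dexp lam x%:C) N =
  \sum_(l < N.+1) 'C(N, l)%:R * dfall x%:C (N - l) lam * Tpp l.
Proof.
rewrite /ps_mul mulr_sumr; apply: eq_bigr => i _.
have Hi : (i <= N)%N by rewrite -ltnS.
have H := bin_fact Hi.
have Hf := fact_neq0 (N - i). have Hf2 := fact_neq0 i.
rewrite /dexp -H natrM natrM.
field.
by rewrite Hf Hf2.
Qed.

Lemma stepC (k : int) (lam x : R) (Tpp : nat -> C) n :
  (n`!)%:R * ps_mul (ps_comp (Ei_coef k lam) (dlog1p lam))
                    (ps_mul (fun j => Tpp j / (j`!)%:R) (dexp lam x%:C)) n =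
  n%:R * \sum_(m < n)
      ('C(n.-1, m)%:R / (m.+1)%:R *
       (\sum_(1 <= j < m.+2)
          dfall 1 j lam / ((j%:R : C) ^ (k - 1)) * S1 lam m.+1 j) *
       \sum_(l < (n.-1 - m).+1)
          'C(n.-1 - m, l)%:R * dfall x%:C (n.-1 - m - l) lam * Tpp l).
Proof.
rewrite /ps_mul big_ord_recl.
have -> : ps_comp (Ei_coef k lam) (dlog1p lam) 0%N = 0.
  by rewrite /ps_comp big_ord1 /Ei_coef eqxx mul0r.
rewrite mul0r add0r !mulr_sumr; apply: eq_bigr => m _.
have Hm := ltn_ord m.
rewrite /bump /= ?add1n.
have HN : (n - m.+1 = n.-1 - m)%N by lia.
rewrite HN -stepC1 -stepC2 /ps_mul.
have Hle : (m.+1 <= n)%N by [].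
have H1 := bin_fact Hle.
rewrite HN in H1.
have H2 : (n%:R : C) * 'C(n.-1, m)%:R = (m.+1)%:R * 'C(n, m.+1)%:R
  by rewrite -!natrM mul_bin_diag.
rewrite -H1 !natrM !mulrA H2.
have H3 := natS_neq0 m.
field.
by rewrite addrC natr1.
Qed.


Lemma ps_mul_scalel (f g : ps R) c n :
  ps_mul (fun i => c * f i) g n = c * ps_mul f g n.
Proof. rewrite /ps_mul mulr_sumr; apply: eq_bigr => i _; ring. Qed.

Lemma main_gen (k : int) (lam : R) (u : C) (x : R) (trig : ps R) (d : C)
   (Tpp : nat -> C) n : u != 1 -> d != 0 ->
  (forall j, trig j = d^-1 * (Tpp j / (j`!)%:R)) ->
  d * (\sum_(l < n.+1) 'C(n, l)%:R * dfall 1 (n - l) lam * ((l`!)%:R * FG_gf k lam u x trig l)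
   - u * ((n`!)%:R * FG_gf k lam u x trig n)) =
  (1 - u) * n%:R * \sum_(m < n)
      ('C(n.-1, m)%:R / (m.+1)%:R *
       (\sum_(1 <= j < m.+2)
          dfall 1 j lam / ((j%:R : C) ^ (k - 1)) * S1 lam m.+1 j) *
       \sum_(l < (n.-1 - m).+1)
          'C(n.-1 - m, l)%:R * dfall x%:C (n.-1 - m - l) lam * Tpp l).
Proof.
move=> hu hd Ht.
rewrite stepB stepA //.
have HY : forall N, ps_mul trig (dexp lam x%:C) N =
   d^-1 * ps_mul (fun j => Tpp j / (j`!)%:R) (dexp lam x%:C) N.
  by move=> N; rewrite -ps_mul_scalel; apply: ps_mul_ext.
rewrite (@ps_mul_ext _ _ _ _ n (fun i => erefl) HY) ps_mul_scaler.
have HC := stepC k lam x Tpp n.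
transitivity ((d * d^-1) * (1 - u) * ((n`!)%:R *
  ps_mul (ps_comp (Ei_coef k lam) (dlog1p lam))
        (ps_mul (fun j : nat => Tpp j / (j`!)%:R) (dexp lam x%:C)) n)).
  by ring.
by rewrite HC divff // mul1r mulrA.
Qed.

End Aux.

Theorem theorem5 (R : realType) (lam : R) (k : int) (u : R[i]) (x y : R)
  (hlam : lam != 0) (hu : u != 1) (n : nat) :
  let rhs (sgn : R[i]) :=
    (1 - u) * n%:R *
    \sum_(m < n)
      ('C(n.-1, m)%:R / (m.+1)%:R *
       (\sum_(1 <= j < m.+2)
          dfall 1 j lam / ((j%:R : R[i]) ^ (k - 1)) * S1 lam m.+1 j) *
       \sum_(l < (n.-1 - m).+1)
          'C(n.-1 - m, l)%:R * dfall x%:C (n.-1 - m - l) lam *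
          (dfall (y%:C * 'i) l lam + sgn * dfall (- (y%:C * 'i)) l lam)) in
  2%:R * (\sum_(l < n.+1) 'C(n, l)%:R * dfall 1 (n - l) lam * FGc l lam k x y u
          - u * FGc n lam k x y u) = rhs 1
  /\
  2%:R * 'i * (\sum_(l < n.+1) 'C(n, l)%:R * dfall 1 (n - l) lam * FGs l lam k x y u
          - u * FGs n lam k x y u) = rhs (-1).
Proof.
move=> rhs; have h2 : (2%:R : R[i]) != 0 by rewrite pnatr_eq0.
split.
- rewrite /FGc /rhs.
  apply: (@main_gen R k lam u x _ _ (fun l => dfall (y%:C * 'i) l lam + 1 * dfall (- (y%:C * 'i)) l lam) n) => // j.
  by rewrite /dcos /dexp; ring.
- rewrite /FGs /rhs.
  apply: (@main_gen R k lam u x _ _ (fun l => dfall (y%:C * 'i) l lam + (-1) * dfall (- (y%:C * 'i)) l lam) n) => //.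
    by rewrite mulf_neq0 // neq0Ci.
  by move=> j; rewrite /dsin /dexp; ring.
Qed.
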